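(* Let $\mathcal{H}$ be a separable Hilbert space, $\{\mathcal{H}_j\}_{j\in J}$ ($J\subseteq\mathbb{Z}$) a sequence of closed subspaces of $\mathcal{H}$, and $K\in\mathcal{B}(\mathcal{H})$ with closed range $\mathcal{R}(K)$. Let $\{\Lambda_j\}_{j\in J}$ and $\{\Theta_j\}_{j\in J}$ be $g$-Bessel sequences with $\Lambda_j,\Theta_j\in\mathcal{B}(\mathcal{H},\mathcal{H}_j)$, and let $U:\mathcal{R}(K)\to\mathcal{R}(K)$, $Uf=\sum_{j\in J}\Lambda_j^{\ast}\Theta_jf$, satisfy $\|I_{\mathcal{R}(K)}-U\|<1$ (i.e. $\{\Theta_j\}$ is an approximate $K$-$g$-dual of $\{\Lambda_j\}$). Then for every $N\in\mathbb{N}$ the sequence $\{\gamma_j^{(N)}\}_{j\in J}$, $\gamma_j^{(N)}=\sum_{n=0}^{N}\Theta_j(I_{\mathcal{R}(K)}-U)^n:\mathcal{R}(K)\to\mathcal{H}_j$, is an approximate $K$-$g$-dual of $\{\Lambda_j\}_{j\in J}$, i.e. it is a $g$-Bessel sequence on $\mathcal{R}(K)$ and $\|I_{\mathcal{R}(K)}-V_N\|<1$, where $V_Nf=\sum_{j\in J}\Lambda_j^{\ast}\gamma_j^{(N)}f$ for $f\in\mathcal{R}(K)$.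
   Context: A sequence $\{\Lambda_j\in\mathcal{B}(\mathcal{H},\mathcal{H}_j)\}_{j\in J}$ is $g$-Bessel if there is $B>0$ with $\sum_{j\in J}\|\Lambda_jf\|^2\leq B\|f\|^2$ for all $f$ in its domain; $T_\Lambda:\{g_j\}\mapsto\sum_j\Lambda_j^\ast g_j$ denotes its synthesis operator, so $U=T_\Lambda T_\Theta^\ast$ restricted to $\mathcal{R}(K)$. Two $g$-Bessel sequences are approximately dual $K$-$g$-frames if $\|I_{\mathcal{R}(K)}-T_\Lambda T_\Theta^\ast\|<1$, where $T_\Lambda T_\Theta^\ast$ is regarded as an operator on $\mathcal{R}(K)$. *)

(* Defs.v *)
From HB Require Import structures.
From mathcomp Require Import all_boot all_order all_algebra.
From mathcomp Require Import boolp classical_sets reals constructive_ereal ereal esum.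
From mathcomp Require Import complex.

Set Implicit Arguments.
Unset Strict Implicit.
Unset Printing Implicit Defensive.

Import Order.TTheory GRing.Theory Num.Theory.
Local Open Scope classical_set_scope.
Local Open Scope ring_scope.

(* A complex Hilbert space is represented by a C-vector space H (C = R[i]
   for a real type R) together with a map ip : H -> H -> C satisfying the
   inner-product axioms (linear in the first argument) and such that H is
   complete for the induced norm. *)

Section Hilbert.
Variable R : realType.
Variable H : lmodType R[i].
Variable ip : H -> H -> R[i].

Definition is_inner_product : Prop :=
  [/\ (forall (a : R[i]) (x y z : H), ip (a *: x + y) z = a * ip x z + ip y z),
      (forall x y : H, ip y x = conjc (ip x y)),
      (forall x : H, 0 <= ip x x) &
      (forall x : H, ip x x = 0 -> x = 0)].

Definition hnorm (x : H) : R := Num.sqrt (complex.Re (ip x x)).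

Definition hcvg (u : nat -> H) (x : H) : Prop :=
  forall e : R, 0 < e -> exists N : nat, forall n, (N <= n)%N -> hnorm (u n - x) < e.

Definition hcauchy (u : nat -> H) : Prop :=
  forall e : R, 0 < e -> exists N : nat,
    forall m n, (N <= m)%N -> (N <= n)%N -> hnorm (u m - u n) < e.

Definition is_hilbert : Prop :=
  is_inner_product /\ (forall u : nat -> H, hcauchy u -> exists x, hcvg u x).

Definition separable : Prop :=
  exists d : nat -> H, forall (x : H) (e : R), 0 < e -> exists n, hnorm (x - d n) < e.

Definition is_closed_set (S : set H) : Prop :=
  forall (u : nat -> H) (x : H), (forall n, S (u n)) -> hcvg u x -> S x.

Definition closed_subspace (S : set H) : Prop :=
  [/\ S 0, (forall (a : R[i]) x y, S x -> S y -> S (a *: x + y)) & is_closed_set S].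

Definition is_linear (T : H -> H) : Prop :=
  forall (a : R[i]) (x y : H), T (a *: x + y) = a *: T x + T y.

Definition bounded_op (T : H -> H) : Prop :=
  is_linear T /\ exists M : R, forall x, hnorm (T x) <= M * hnorm x.

Definition bounded_op_into (S : set H) (T : H -> H) : Prop :=
  bounded_op T /\ forall x, S (T x).

Definition is_adjoint (T Ts : H -> H) : Prop :=
  forall x y, ip (T x) y = ip x (Ts y).

(* unconditional convergence of the series sum_{j in J} u j to s in H:
   the net of finite partial sums over finite subsets of J converges to s *)
Definition hasSum (J : set int) (u : int -> H) (s : H) : Prop :=
  forall e : R, 0 < e -> exists F0 : seq int,
    [/\ uniq F0, (forall j, j \in F0 -> J j) &
      forall F : seq int, uniq F -> (forall j, j \in F -> J j) ->
        (forall j, j \in F0 -> j \in F) ->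
        hnorm (\sum_(j <- F) u j - s) < e].

Definition gBessel_on (S : set H) (J : set int) (L : int -> H -> H) : Prop :=
  exists B : R, 0 < B /\ forall f, S f ->
    (\esum_(j in J) ((hnorm (L j f)) ^+ 2)%:E <= (B * hnorm f ^+ 2)%:E)%E.

(* operator norm of T restricted to the subspace S, in the extended reals
   (it is +oo when T is unbounded on S) *)
Definition opnorm_on (S : set H) (T : H -> H) : \bar R :=
  ereal_sup ((fun f => (hnorm (T f))%:E) @` [set f | S f /\ hnorm f <= 1]).

End Hilbert.

(* Main.v *)
Require Import Defs.
From HB Require Import structures.
From mathcomp Require Import all_boot all_order all_algebra.
From mathcomp Require Import boolp classical_sets reals constructive_ereal ereal esum.
From mathcomp Require Import complex.
From mathcomp Require Import ring lra.
Import Order.TTheory GRing.Theory Num.Theory.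
Set Implicit Arguments.
Unset Strict Implicit.
Local Open Scope classical_set_scope.
Local Open Scope complex_scope.
Local Open Scope ring_scope.

Section IP.
Variable R : realType.
Variable H : lmodType R[i].
Variable ip : H -> H -> R[i].
Hypothesis hip : is_inner_product ip.

Definition B x y := complex.Re (ip x y).
Local Notation hn := (hnorm ip).

Lemma ReM (a : R) (w : R[i]) : complex.Re (a%:C * w) = a * complex.Re w.
Proof. by case: w => x y /=; rewrite mul0r subr0. Qed.
Lemma ReJ (w : R[i]) : complex.Re (conjc w) = complex.Re w.
Proof. by case: w. Qed.
Lemma ReD (w z : R[i]) : complex.Re (w + z) = complex.Re w + complex.Re z.
Proof. by case: w; case: z. Qed.

Lemma Blin (a : R) x y z : B (a%:C *: x + y) z = a * B x z + B y z.
Proof. by case: hip => h _ _ _; rewrite /B h ReD ReM. Qed.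
Lemma Bsym x y : B x y = B y x.
Proof. by case: hip => _ h _ _; rewrite /B h ReJ. Qed.
Lemma Bge0 x : 0 <= B x x.
Proof. by case: hip => _ _ h _; move: (h x); rewrite lecE => /andP[]. Qed.
Lemma Bdef x : B x x = 0 -> x = 0.
Proof.
case: hip => _ _ h1 h2 hB; apply: h2; have := ger0_Im (h1 x).
move: hB; rewrite /B; case: (ip x x) => a b /= -> ->; by [].
Qed.
Lemma BlinR (a : R) x y z : B z (a%:C *: x + y) = a * B z x + B z y.
Proof. by rewrite Bsym Blin (Bsym x) (Bsym y). Qed.
Lemma B0l z : B 0 z = 0.
Proof.
have := Blin 1 0 0 z; rewrite scaler0 addr0 mul1r => h.
by apply: (@addrI _ (B 0 z)); rewrite addr0 -h.
Qed.
Lemma B0r z : B z 0 = 0. Proof. by rewrite Bsym B0l. Qed.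
Lemma BDl x y z : B (x + y) z = B x z + B y z.
Proof. by have := Blin 1 x y z; rewrite mul1r scale1r. Qed.
Lemma BNl x z : B (- x) z = - B x z.
Proof. by rewrite -scaleN1r -[_ *: x]addr0 -(rmorphN1 (real_complex R)) Blin B0l addr0 mulN1r. Qed.
Lemma BZl (a : R) x z : B (a%:C *: x) z = a * B x z.
Proof. by rewrite -[_ *: x]addr0 Blin B0l addr0. Qed.
Lemma BDr x y z : B z (x + y) = B z x + B z y.
Proof. by rewrite Bsym BDl !(Bsym z). Qed.
Lemma BNr x z : B z (- x) = - B z x.
Proof. by rewrite Bsym BNl Bsym. Qed.
Lemma BZr (a : R) x z : B z (a%:C *: x) = a * B z x.
Proof. by rewrite Bsym BZl Bsym. Qed.

Lemma hnE x : hn x = Num.sqrt (B x x). Proof. by []. Qed.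
Lemma hn_ge0 x : 0 <= hn x. Proof. exact: sqrtr_ge0. Qed.
Lemma hn_sqr x : hn x ^+ 2 = B x x.
Proof. by rewrite hnE sqr_sqrtr // Bge0. Qed.
Lemma hn0 : hn 0 = 0. Proof. by rewrite hnE B0l sqrtr0. Qed.
Lemma hn_eq0 x : hn x = 0 -> x = 0.
Proof.
move=> h; apply: Bdef; have := hn_sqr x; rewrite h expr0n /= => <-; by [].
Qed.
Lemma hnZ (a : R) x : hn (a%:C *: x) = `|a| * hn x.
Proof.
by rewrite hnE BZl BZr mulrA -expr2 sqrtrM ?sqr_ge0 // sqrtr_sqr.
Qed.
Lemma hnN x : hn (- x) = hn x.
Proof. by rewrite -scaleN1r -(rmorphN1 (real_complex R)) hnZ normrN normr1 mul1r. Qed.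

Lemma quad (a b c : R) : 0 <= c -> (forall t, 0 <= a + 2 * t * b + t ^+ 2 * c) ->
  b ^+ 2 <= a * c.
Proof.
move=> c0 h; have [cz|cp] := eqVneq c 0.
  rewrite cz mulr0; have [bz|bn] := eqVneq b 0; first by rewrite bz expr0n.
  have := h (- (a + 1) / (2 * b)); rewrite cz mulr0 addr0.
  have -> : 2 * (- (a + 1) / (2 * b)) * b = - (a + 1).
    by field.
  lra.
have cpos : 0 < c by rewrite lt_def cp c0.
have := h (- b / c).
have -> : a + 2 * (- b / c) * b + (- b / c) ^+ 2 * c = a - b ^+ 2 / c.
  by field; rewrite cp.
rewrite subr_ge0 ler_pdivrMr //.
Qed.

Lemma CS x y : B x y ^+ 2 <= B x x * B y y.
Proof.
apply: quad; first exact: Bge0.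
move=> t; have := Bge0 (x + t%:C *: y).
rewrite !(BDl, BDr, BZl, BZr) (Bsym y x); lra.
Qed.

Lemma hnD x y : hn (x + y) <= hn x + hn y.
Proof.
have hx := hn_ge0 x; have hy := hn_ge0 y.
have h1 : B x y <= hn x * hn y.
  have := CS x y; rewrite -!hn_sqr => h.
  have hp : 0 <= hn x * hn y by rewrite mulr_ge0.
  nra.
rewrite -(ler_pXn2r (n := 2)) // ?nnegrE ?hn_ge0 ?addr_ge0 //.
rewrite hn_sqr !(BDl, BDr) (Bsym y x) sqrrD -!hn_sqr; lra.
Qed.

Lemma hnB x y : hn (x - y) <= hn x + hn y.
Proof. by rewrite -(hnN y) hnD. Qed.

Lemma hn_sum m (f : nat -> H) : hn (\sum_(n < m) f n) <= \sum_(n < m) hn (f n).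
Proof.
elim: m => [|m IH]; first by rewrite !big_ord0 hn0.
rewrite !big_ord_recr /=; apply: le_trans (hnD _ _) _; exact: lerD.
Qed.


Section Sums.
Variable J : set int.

Lemma hasSum_uniq u s t : hasSum ip J u s -> hasSum ip J u t -> s = t.
Proof.
move=> hs ht; apply/eqP; rewrite -subr_eq0; apply/eqP/hn_eq0.
have [//|dp] := eqVneq (hn (s - t)) 0.
have d0 : 0 < hn (s - t) by rewrite lt_def dp hn_ge0.
have e0 : 0 < hn (s - t) / 2 by rewrite divr_gt0.
have [F1 [u1 j1 h1]] := hs _ e0; have [F2 [u2 j2 h2]] := ht _ e0.
set F := undup (F1 ++ F2).
have uF : uniq F by exact: undup_uniq.
have jF : forall j, j \in F -> J j.
  by move=> j; rewrite mem_undup mem_cat => /orP[/j1|/j2].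
have s1 : forall j, j \in F1 -> j \in F by move=> j h; rewrite mem_undup mem_cat h.
have s2 : forall j, j \in F2 -> j \in F by move=> j h; rewrite mem_undup mem_cat h orbT.
have := h1 F uF jF s1.
have := h2 F uF jF s2.
set S := \sum_(j <- F) u j => a1 a2.
have : hn (s - t) <= hn (S - t) + hn (S - s).
  have -> : s - t = (S - t) - (S - s) by rewrite opprB [RHS]addrC addrA subrK.
  exact: hnB.
lra.
Qed.

Lemma hasSum_add u v s t : hasSum ip J u s -> hasSum ip J v t ->
  hasSum ip J (fun j => u j + v j) (s + t).
Proof.
move=> hs ht e e0.
have e2 : 0 < e / 2 by rewrite divr_gt0.
have [F1 [u1 j1 h1]] := hs _ e2; have [F2 [u2 j2 h2]] := ht _ e2.
exists (undup (F1 ++ F2)); split; first exact: undup_uniq.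
  by move=> j; rewrite mem_undup mem_cat => /orP[/j1|/j2].
move=> F uF jF sF.
have s1 : forall j, j \in F1 -> j \in F by move=> j h; apply: sF; rewrite mem_undup mem_cat h.
have s2 : forall j, j \in F2 -> j \in F by move=> j h; apply: sF; rewrite mem_undup mem_cat h orbT.
have a1 := h1 F uF jF s1.
have a2 := h2 F uF jF s2.
rewrite big_split /=.
have -> : \sum_(j <- F) u j + \sum_(j <- F) v j - (s + t) =
   (\sum_(j <- F) u j - s) + (\sum_(j <- F) v j - t).
  by rewrite opprD !addrA; congr (_ + _); rewrite -!addrA; congr (_ + _); rewrite addrC.
apply: le_lt_trans (hnD _ _) _; lra.
Qed.

Lemma hasSum_scale (a : R) u s : hasSum ip J u s ->
  hasSum ip J (fun j => a%:C *: u j) (a%:C *: s).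
Proof.
move=> hs e e0.
have a1 : 0 < `|a| + 1 by rewrite ltr_wpDl.
have e2 : 0 < e / (`|a| + 1) by rewrite divr_gt0.
have [F1 [u1 j1 h1]] := hs _ e2.
exists F1; split => // F uF jF sF.
have := h1 F uF jF sF.
rewrite -scaler_sumr -scalerBr hnZ => h.
have hh := hn_ge0 (\sum_(j <- F) u j - s).
have := normr_ge0 a.
rewrite ltr_pdivlMr // in h.
nra.
Qed.

Lemma hasSum_ext u v s : (forall j, J j -> u j = v j) ->
  hasSum ip J u s -> hasSum ip J v s.
Proof.
move=> huv hs e e0; have [F1 [u1 j1 h1]] := hs _ e0.
exists F1; split => // F uF jF sF.
rewrite -(eq_big_seq _ (fun j h => huv j (jF j h))); exact: h1.
Qed.

Lemma hasSum0 : hasSum ip J (fun _ => 0) 0.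
Proof.
move=> e e0; exists [::]; split => // F _ _ _.
by rewrite big1 // subr0 hn0.
Qed.

Lemma hasSum_big m (u : nat -> int -> H) (s : nat -> H) :
  (forall n, (n < m)%N -> hasSum ip J (u n) (s n)) ->
  hasSum ip J (fun j => \sum_(n < m) u n j) (\sum_(n < m) s n).
Proof.
elim: m => [|m IH] h.
  rewrite big_ord0; apply: hasSum_ext; last exact: hasSum0.
  by move=> j _; rewrite big_ord0.
rewrite big_ord_recr /=.
have IH' := IH (fun n hn => h n (ltnW hn)).
apply: hasSum_ext; last exact: (hasSum_add IH' (h m (ltnSn m))).
by move=> j _; rewrite big_ord_recr.
Qed.

End Sums.

Definition rlin (f : H -> H) := forall (a : R) x y, f (a%:C *: x + y) = a%:C *: f x + f y.

Lemma rlin0 f : rlin f -> f 0 = 0.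
Proof.
move=> h; have := h 1 0 0; rewrite scaler0 addr0 scale1r => e.
by apply: (@addrI _ (f 0)); rewrite addr0 -e.
Qed.
Lemma rlinD f x y : rlin f -> f (x + y) = f x + f y.
Proof. by move=> h; have := h 1 x y; rewrite !scale1r. Qed.
Lemma rlinZ f (a : R) x : rlin f -> f (a%:C *: x) = a%:C *: f x.
Proof. by move=> h; rewrite -[_ *: x]addr0 h rlin0 // addr0. Qed.
Lemma rlin_sum f m (g : nat -> H) : rlin f ->
  f (\sum_(n < m) g n) = \sum_(n < m) f (g n).
Proof.
move=> h; elim: m => [|m IH]; first by rewrite !big_ord0 rlin0.
by rewrite !big_ord_recr /= rlinD // IH.
Qed.
Lemma lin_rlin f : is_linear f -> rlin f.
Proof. by move=> h a x y; rewrite h. Qed.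
Lemma adj_rlin T Ts : is_adjoint ip T Ts -> rlin Ts.
Proof.
move=> hadj a x y.
have hB : forall z w, B z (Ts w) = B (T z) w by move=> z w; rewrite /B hadj.
set l := Ts _; set r := _ + _.
have e : forall z, B z l = B z r.
  by move=> z; rewrite /l /r hB BlinR !(BDr, BZr) !hB.
apply/eqP; rewrite -subr_eq0; apply/eqP; apply: Bdef.
by rewrite BDr BNr e subrr.
Qed.

Lemma tele (w : nat -> H) m : \sum_(n < m) (w n - w n.+1) = w 0%N - w m.
Proof.
elim: m => [|m IH]; first by rewrite big_ord0 subrr.
by rewrite big_ord_recr /= IH addrA subrK.
Qed.

End IP.

Lemma sq_sum (R : realType) m (a : nat -> R) :
  (\sum_(n < m) a n) ^+ 2 <= 2 ^+ m * \sum_(n < m) a n ^+ 2.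
Proof.
elim: m => [|m IH]; first by rewrite !big_ord0 expr0n /= mul1r.
rewrite !big_ord_recr /=.
set S := \sum_(i < m) a i; set Q := \sum_(i < m) a i ^+ 2.
have h1 : 1 <= (2 : R) ^+ m by rewrite exprn_ege1 // ler1n.
have hQ : 0 <= Q by rewrite sumr_ge0 // => i _; rewrite sqr_ge0.
have ha := sqr_ge0 (a m).
have hSa := sqr_ge0 (S - a m).
set p := (2 : R) ^+ m in IH h1 *.
have hp : 0 <= (p - 1) * a m ^+ 2 by rewrite mulr_ge0 // subr_ge0.
have e1 : (S + a m) ^+ 2 = 2 * S ^+ 2 + 2 * a m ^+ 2 - (S - a m) ^+ 2.
  by ring.
have -> : (2 : R) ^+ m.+1 = 2 * p by rewrite exprS.
rewrite e1 mulrDr; rewrite mulrBl mul1r in hp.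
move: IH hSa hp; set X := (S - a m) ^+ 2; set Y := a m ^+ 2; set Z := S ^+ 2.
move=> IH hSa hp.
have : 2 * Z <= 2 * (p * Q) by rewrite ler_pM2l.
lra.
Qed.

Lemma sum_constE (R : realType) M (x : R) : \sum_(k < M) x = M%:R * x.
Proof.
elim: M => [|M IH]; first by rewrite big_ord0 mul0r.
by rewrite big_ord_recr /= IH -addn1 natrD mulrDl mul1r.
Qed.

Theorem mainTheorem6 (R : realType) (H : lmodType R[i]) (ip : H -> H -> R[i])
  (J : set int) (Hs : int -> set H) (K : H -> H)
  (Lam Th LamAdj : int -> H -> H) (U : H -> H) :
  is_hilbert ip -> separable ip ->
  (forall j, J j -> closed_subspace ip (Hs j)) ->
  bounded_op ip K -> is_closed_set ip (range K) ->
  (forall j, J j -> bounded_op_into ip (Hs j) (Lam j)) ->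
  (forall j, J j -> bounded_op_into ip (Hs j) (Th j)) ->
  (forall j, J j -> is_adjoint ip (Lam j) (LamAdj j)) ->
  gBessel_on ip setT J Lam -> gBessel_on ip setT J Th ->
  (forall f, range K f -> hasSum ip J (fun j => LamAdj j (Th j f)) (U f)) ->
  (forall f, range K f -> range K (U f)) ->
  (opnorm_on ip (range K) (fun f => (f - U f)%R) < 1%:E)%E ->
  forall N : nat,
    let gamma := fun (j : int) (f : H) =>
      \sum_(n < N.+1) Th j (iter n (fun g => g - U g) f) in
    gBessel_on ip (range K) J gamma /\
    exists V : H -> H,
      [/\ (forall f, range K f -> hasSum ip J (fun j => LamAdj j (gamma j f)) (V f)),
          (forall f, range K f -> range K (V f)) &
          (opnorm_on ip (range K) (fun f => (f - V f)%R) < 1%:E)%E].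
Proof.
move=> hH _ _ hK _ _ hTh hAdj _ [BT [BT0 hBT]] hU hUK hop N gamma.
have hip := hH.1.
set T := (fun g => g - U g) in hop gamma *.
set P := range K.
have Klin : rlin K by apply: lin_rlin; exact: hK.1.
have PL : forall (a : R[i]) x y, P x -> P y -> P (a *: x + y).
  move=> a x y [x' _ <-] [y' _ <-]; exists (a *: x' + y') => //; exact: hK.1.
have P0 : P 0 by exists 0 => //; exact: rlin0.
have PB : forall x y, P x -> P y -> P (x - y).
  by move=> x y hx hy; rewrite addrC -scaleN1r; apply: PL.
have PZ : forall (a : R) x, P x -> P (a%:C *: x).
  by move=> a x hx; rewrite -[_ *: x]addr0; apply: PL.
have PT : forall g, P g -> P (T g) by move=> g hg; apply: PB => //; exact: hUK.
have Piter : forall n f, P f -> P (iter n T f).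
  by move=> n f hf; elim: n => [|n IH] //=; apply: PT.
have Thl : forall j, J j -> rlin (Th j).
  by move=> j hj; apply: lin_rlin; exact: (hTh j hj).1.1.
have Adl : forall j, J j -> rlin (LamAdj j).
  by move=> j hj; apply: (adj_rlin hip); exact: hAdj j hj.
have UZ : forall (a : R) g, P g -> U (a%:C *: g) = a%:C *: U g.
  move=> a g hg; apply: (hasSum_uniq hip (hU _ (PZ a g hg))).
  apply: hasSum_ext; last exact: (hasSum_scale hip a (hU g hg)).
  by move=> j hj /=; rewrite (rlinZ _ _ (Thl j hj)) (rlinZ _ _ (Adl j hj)).
have TZ : forall (a : R) g, P g -> T (a%:C *: g) = a%:C *: T g.
  by move=> a g hg; rewrite /T UZ // scalerBr.
have T0 : T 0 = 0.
  by have := TZ 0 0 P0; rewrite scaler0 => ->; exact: scale0r.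
have hsup : forall h, P h -> hnorm ip h <= 1 -> hnorm ip (T h) < 1.
  move=> h Ph h1; rewrite -lte_fin; apply: le_lt_trans hop.
  by apply: ereal_sup_ubound; exists h.
have contr : forall g, P g -> hnorm ip (T g) <= hnorm ip g.
  move=> g hg; have [z|nz] := eqVneq (hnorm ip g) 0.
    by rewrite (hn_eq0 hip z) T0 hn0.
  have r0 : 0 < hnorm ip g by rewrite lt_def nz hn_ge0.
  have eg : g = (hnorm ip g)%:C *: ((hnorm ip g)^-1%:C *: g).
    by rewrite scalerA -rmorphM mulfV // rmorph1 scale1r.
  have hg' : hnorm ip ((hnorm ip g)^-1%:C *: g) = 1.
    by rewrite hnZ // ger0_norm ?invr_ge0 ?ltW // mulVf.
  have h1 : hnorm ip ((hnorm ip g)^-1%:C *: g) <= 1 by rewrite hg'.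
  have := hsup _ (PZ _ _ hg) h1.
  have -> : T g = (hnorm ip g)%:C *: T ((hnorm ip g)^-1%:C *: g).
    by rewrite {1}eg TZ //; exact: PZ.
  rewrite hnZ // (ger0_norm (ltW r0)) => h.
  rewrite -[X in _ <= X]mulr1 ler_pM2l //; exact: ltW.
have citer : forall n f, P f -> hnorm ip (iter n T f) <= hnorm ip f.
  elim => [//|n IH] f hf /=; exact: le_trans (contr _ (Piter n f hf)) (IH f hf).
split.
  exists ((2 ^ N.+1)%N%:R * N.+1%:R * BT); split.
    by rewrite !mulr_gt0 // ltr0n expn_gt0.
  move=> f hf.
  set M := (2 ^ N.+1)%N.
  apply: (@le_trans _ _ (\esum_(j in J) \sum_(k < M) \sum_(n < N.+1)
       ((hnorm ip (Th j (iter n T f))) ^+ 2)%:E)%E).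
    apply: le_esum => j hj.
    rewrite sumEFin sumEFin lee_fin sum_constE.
    have e1 : hnorm ip (gamma j f) <= \sum_(n < N.+1) hnorm ip (Th j (iter n T f)).
      exact: (hn_sum hip N.+1 (fun n => Th j (iter n T f))).
    have s0 : 0 <= \sum_(n < N.+1) hnorm ip (Th j (iter n T f)).
      by apply: sumr_ge0 => i _; exact: hn_ge0.
    apply: (@le_trans _ _ ((\sum_(n < N.+1) hnorm ip (Th j (iter n T f))) ^+ 2)).
      by rewrite ler_pXn2r // ?nnegrE ?hn_ge0.
    apply: le_trans (sq_sum N.+1 (fun n => hnorm ip (Th j (iter n T f)))) _.
    by rewrite /M natrX.
  rewrite esum_sum; last first.
    by move=> j k hj _; apply: sume_ge0 => n _; rewrite lee_fin sqr_ge0.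
  apply: (@le_trans _ _ (\sum_(k < M) \sum_(n < N.+1) (BT * hnorm ip f ^+ 2)%:E)%E).
    apply: lee_sum => k _; rewrite esum_sum; last by move=> j n _ _; rewrite lee_fin sqr_ge0.
    apply: lee_sum => n _; apply: le_trans (hBT _ I) _; rewrite lee_fin; apply: ler_wpM2l; first exact: ltW.
    rewrite ler_pXn2r ?nnegrE ?hn_ge0 //; exact: citer.
  by rewrite sumEFin sumEFin lee_fin !sum_constE !mulrA.
exists (fun f => f - iter N.+1 T f); split.
- move=> f hf.
  have e : forall n, U (iter n T f) = iter n T f - iter n.+1 T f.
    by move=> n /=; rewrite /T opprB addrC subrK.
  apply: (@hasSum_ext _ _ _ _ (fun j => \sum_(n < N.+1) LamAdj j (Th j (iter n T f)))).
    by move=> j hj; rewrite /gamma /= (rlin_sum N.+1 (fun n => Th j (iter n T f)) (Adl j hj)).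
  have := hasSum_big hip (J:=J) (m:=N.+1) (fun n _ => hU _ (Piter n f hf)).
  have -> : f - iter N.+1 T f = \sum_(n < N.+1) (iter n T f - iter n.+1 T f).
    by rewrite (tele (fun n => iter n T f)).
  move=> hs.
  suff <- : \sum_(n < N.+1) U (iter n T f) =
            \sum_(n < N.+1) (iter n T f - iter n.+1 T f) by [].
  by apply: eq_bigr => i _; rewrite e.
- by move=> f hf; apply: PB => //; exact: Piter.
- apply: le_lt_trans hop; apply: ge_ereal_sup => _ [f [hf h1] <-].
  rewrite opprB addrC subrK /=.
  apply: ereal_sup_ubound; exists (iter N T f) => //; split; first exact: Piter.
  exact: le_trans (citer _ _ hf) h1.
Qed.
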